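(* Consider a run of RLS-GP on the target $\mathrm{AND}_n$ with $F = \{\mathrm{AND}, \mathrm{OR}\}$, $L = \{x_1, \ldots, x_n\}$, a tree size limit $\ell \ge n$, and the complete truth table as fitness. Let $T$ be the number of iterations before the optimum is found, and let $T_0 \le T$ be the number of these iterations in which the parent (current) tree is not full, i.e. has fewer than $\ell$ leaves. Then $E[T_0] = O(\ell\, n \log^2 n)$.
   Context: Programs are finite rooted binary trees (the empty tree is allowed) whose internal nodes are labelled by binary Boolean functions from $F$ and whose leaves are labelled by literals from $L$; a program computes a Boolean function of $(x_1,\dots,x_n)$ in the obvious way. $\mathrm{AND}_n(x) = x_1 \wedge \dots \wedge x_n$. The fitness (to be minimised) of a program $X$ is $f(X) = |\{x \in \{0,1\}^n : X(x) \ne \mathrm{AND}_n(x)\}|$; the optimum is a tree of fitness $0$. LeafCount$(X)$ is the number of leaves of $X$. HVL-Prime with subtree deletion, applied to a tree $X$: choose $op \in \{\mathrm{INS}, \mathrm{DEL}, \mathrm{SUB}\}$, a literal $l \in L$ and a function $g \in F$, independently and uniformly at random. If $X$ is empty, the result is the single leaf $l$. Otherwise: if $op = \mathrm{INS}$, choose a node $x$ of $X$ uniformly at random and replace it by a new node labelled $g$ whose two children are the subtree rooted at $x$ and a new leaf $l$, in uniformly random order; if $op = \mathrm{DEL}$, choose a node $x$ of $X$ (leaf or internal) uniformly at random and replace the parent of $x$ by the sibling of $x$; if $op = \mathrm{SUB}$, choose a leaf of $X$ uniformly at random and replace it by $l$. RLS-GP with tree size limit $\ell$: start with the empty tree $X$;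 in each iteration let $X' := $ HVL-Prime$(X)$, and if LeafCount$(X') \le \ell$ and $f(X') \le f(X)$ then set $X := X'$. Asymptotics are as $n \to \infty$. *)

(* Defs.v *)
From HB Require Import structures.
From mathcomp Require Import all_boot all_order all_algebra.
From mathcomp Require Import reals exp.
Set Implicit Arguments. Unset Strict Implicit. Unset Printing Implicit Defensive.
Import Order.TTheory GRing.Theory Num.Theory.

(* Non-empty trees over F = {AND, OR} (true = AND, false = OR) and
   L = {x_1, ..., x_n} (leaf label i : 'I_n stands for x_(i+1)).
   A program is an [option (tree n)], [None] being the empty tree. *)
Inductive tree (n : nat) : Type :=
| Leaf of 'I_n
| Node of bool & tree n & tree n.
Arguments Leaf {n}.
Arguments Node {n}.

Definition prog (n : nat) := option (tree n).

Section Trees.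
Variable n : nat.

Fixpoint tsize (t : tree n) : nat :=
  match t with Leaf _ => 1 | Node _ a b => (tsize a + tsize b).+1 end.

Fixpoint tleaves (t : tree n) : nat :=
  match t with Leaf _ => 1 | Node _ a b => tleaves a + tleaves b end.

Definition LeafCount (X : prog n) : nat :=
  if X is Some t then tleaves t else 0.

Fixpoint teval (t : tree n) (x : {ffun 'I_n -> bool}) : bool :=
  match t with
  | Leaf i => x i
  | Node g a b => if g then teval a x && teval b x else teval a x || teval b x
  end.

Definition ANDn (x : {ffun 'I_n -> bool}) : bool := [forall i, x i].

(* Fitness: number of misclassified inputs.  Convention: the empty tree
   computes nothing and gets the worst possible fitness 2^n. *)
Definition fitness (X : prog n) : nat :=
  if X is Some t then #|[set x : {ffun 'I_n -> bool} | teval t x != ANDn x]|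
  else 2 ^ n.

(* Nodes are numbered 0 .. tsize t - 1 in preorder.
   [modify_at f t k] replaces the subtree rooted at node k by its image by f. *)
Fixpoint modify_at (f : tree n -> tree n) (t : tree n) (k : nat) : tree n :=
  if k is 0 then f t else
  match t with
  | Leaf _ => t
  | Node g a b =>
      if k.-1 < tsize a then Node g (modify_at f a k.-1) b
      else Node g a (modify_at f b (k.-1 - tsize a))
  end.

Definition ins (t : tree n) (k : nat) (g : bool) (l : 'I_n) (side : bool) :=
  modify_at (fun s => if side then Node g s (Leaf l) else Node g (Leaf l) s) t k.

(* DEL of the non-root node k (k >= 1): the parent of node k is replaced by
   the sibling of node k. *)
Fixpoint del_nonroot (t : tree n) (k : nat) : tree n :=
  match t with
  | Leaf _ => t
  | Node g a b =>
      if k == 1 then b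
      else if k == (tsize a).+1 then a
      else if k <= tsize a then Node g (del_nonroot a k.-1) b
      else Node g a (del_nonroot b (k - (tsize a).+1))
  end.

(* DEL of the root (which has no parent) yields the empty tree. *)
Definition del (t : tree n) (k : nat) : prog n :=
  if k is 0 then None else Some (del_nonroot t k).

(* Leaves are numbered 0 .. tleaves t - 1 from left to right;
   SUB replaces leaf j by literal l. *)
Fixpoint sub_leaf (t : tree n) (j : nat) (l : 'I_n) : tree n :=
  match t with
  | Leaf _ => Leaf l
  | Node g a b =>
      if j < tleaves a then Node g (sub_leaf a j l) b
      else Node g a (sub_leaf b (j - tleaves a) l)
  end.

End Trees.

Section Dist.
Variable R : realType.
Local Open Scope ring_scope.

(* Finitely supported distributions as weighted lists of outcomes. *)
Definition dist (T : Type) := seq (R * T).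

Definition dbind (A B : Type) (d : dist A) (k : A -> dist B) : dist B :=
  flatten [seq [seq (pa.1 * pb.1, pb.2) | pb <- k pa.2] | pa <- d].

Definition unif (T : Type) (s : seq T) : dist T :=
  [seq ((size s)%:R^-1, x) | x <- s].

Inductive hvl_op := INS | DEL | SUB.

Variable n : nat.

(* One application of HVL-Prime (with subtree deletion) to X. *)
Definition hvl (X : prog n) : dist (prog n) :=
  dbind (unif [:: INS; DEL; SUB]) (fun op =>
  dbind (unif (enum 'I_n)) (fun l =>
  dbind (unif [:: true; false]) (fun g =>
  match X with
  | None => [:: (1, Some (Leaf l))]
  | Some t =>
      match op with
      | INS => dbind (unif (iota 0 (tsize t))) (fun k =>
               dbind (unif [:: true; false]) (fun side =>
               [:: (1, Some (ins t k g l side))]))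
      | DEL => dbind (unif (iota 0 (tsize t))) (fun k => [:: (1, del t k)])
      | SUB => dbind (unif (iota 0 (tleaves t))) (fun j =>
               [:: (1, Some (sub_leaf t j l))])
      end
  end))).

Definition rls_step (ell : nat) (X : prog n) : dist (prog n) :=
  [seq (pX'.1, if (LeafCount pX'.2 <= ell)%N && (fitness pX'.2 <= fitness X)%N
               then pX'.2 else X) | pX' <- hvl X].

Fixpoint rls_dist (ell t : nat) : dist (prog n) :=
  if t is t'.+1 then dbind (rls_dist ell t') (rls_step ell) else [:: (1, None)].

Definition p_notfull_nonopt (ell t : nat) : R :=
  \sum_(pX <- rls_dist ell t |
          (fitness pX.2 != 0)%N && (LeafCount pX.2 < ell)%N) pX.1.

(* E[T_0] = sum over t >= 0 of p_notfull_nonopt ell t (a series of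
   nonnegative terms); its partial sums: *)
Definition ET0_partial (ell t : nat) : R :=
  \sum_(s < t) p_notfull_nonopt ell s.

End Dist.

(* Main.v *)
Require Import Defs.
From HB Require Import structures.
From mathcomp Require Import all_boot all_order all_algebra.
From mathcomp Require Import reals exp.
From mathcomp Require Import ring lra zify.
Import Order.TTheory GRing.Theory Num.Theory.
Local Open Scope ring_scope.
Set Implicit Arguments. Unset Strict Implicit. Unset Printing Implicit Defensive.

Notation tsz := Defs.tsize.
Section DistLemmas.
Variable R : realType.

Definition Ex (T : Type) (d : dist R T) (F : T -> R) : R := \sum_(p <- d) p.1 * F p.2.
Definition nonneg (T : Type) (d : dist R T) := all (fun p => 0 <= p.1) d.

Lemma Ex_dbind (A B : Type) (d : dist R A) (k : A -> dist R B) F :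
  Ex (dbind d k) F = \sum_(p <- d) p.1 * Ex (k p.2) F.
Proof.
rewrite /Ex /dbind big_flatten big_map; apply: eq_bigr => p _.
rewrite big_map big_distrr; apply: eq_bigr => q _ /=; by rewrite mulrA.
Qed.

Lemma Ex_dbind_unif (A B : Type) (s : seq A) (k : A -> dist R B) F :
  Ex (dbind (unif R s) k) F = \sum_(x <- s) (size s)%:R^-1 * Ex (k x) F.
Proof. by rewrite Ex_dbind /unif big_map. Qed.

Lemma Ex_one (A : Type) (x : A) F : Ex [:: (1, x)] F = F x.
Proof. by rewrite /Ex big_seq1 mul1r. Qed.

Lemma nonneg_dbind (A B : Type) (d : dist R A) (k : A -> dist R B) :
  nonneg d -> (forall x, nonneg (k x)) -> nonneg (dbind d k).
Proof.
move=> hd hk; elim: d hd => [|p d IH] //= /andP[hp hd].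
rewrite /nonneg /dbind /= all_cat; apply/andP; split; last exact: IH.
move: (hk p.2); rewrite /nonneg; elim: (k p.2) => //= q s IHs /andP[hq hs].
by rewrite mulr_ge0 ?IHs.
Qed.

Lemma nonneg_unif (A : Type) (s : seq A) : nonneg (unif R s).
Proof. by rewrite /nonneg /unif; move: (size s) => m; elim: s => //= x s ->; rewrite invr_ge0 ler0n. Qed.

Lemma nonneg_one (A : Type) (x : A) : nonneg [:: ((1:R), x)].
Proof. by rewrite /nonneg /= ler01. Qed.

Lemma Ex_le (A : Type) (d : dist R A) F G :
  nonneg d -> (forall x, F x <= G x) -> Ex d F <= Ex d G.
Proof.
move=> hd hFG; rewrite /Ex; elim: d hd => [|p d IH] /=; first by rewrite !big_nil.
move=> /andP[hp hd]; rewrite !big_cons lerD ?IH //.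
by apply: ler_wpM2l.
Qed.

Lemma Ex_ge0 (A : Type) (d : dist R A) F :
  nonneg d -> (forall x, 0 <= F x) -> 0 <= Ex d F.
Proof.
move=> hd hF; have := @Ex_le _ d (fun _ => 0) F hd hF.
by rewrite /Ex big1 // => p _; rewrite mulr0.
Qed.

Lemma Ex_lin (A : Type) (d : dist R A) c G :
  Ex d (fun x => c - G x) = c * Ex d (fun _ => 1) - Ex d G.
Proof.
rewrite /Ex big_distrr -sumrB; apply: eq_bigr => p _ /=.
by rewrite mulr1 mulrBr mulrC.
Qed.

Lemma sum_seq_ge (A : Type) (s : seq A) (f : A -> R) x :
  List.In x s -> (forall y, 0 <= f y) -> f x <= \sum_(y <- s) f y.
Proof.
elim: s => [|y s IH] //=; rewrite big_cons => -[-> | xs] hf.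
  by rewrite lerDl sumr_ge0.
by rewrite (le_trans (IH xs hf)) // lerDr.
Qed.

Lemma Ex_dbind_unif_ge (A B : Type) (s : seq A) (k : A -> dist R B) F x :
  List.In x s -> (forall y, 0 <= Ex (k y) F) ->
  (size s)%:R^-1 * Ex (k x) F <= Ex (dbind (unif R s) k) F.
Proof.
move=> xs h; rewrite Ex_dbind_unif.
apply: (sum_seq_ge (f := fun y => (size s)%:R^-1 * Ex (k y) F)) => // y.
by rewrite mulr_ge0 // invr_ge0.
Qed.

Lemma Ex_dbind_unif_const (A B : Type) (s : seq A) (k : A -> dist R B) F c :
  (0 < size s)%N -> (forall y, Ex (k y) F = c) -> Ex (dbind (unif R s) k) F = c.
Proof.
move=> hs h; rewrite Ex_dbind_unif.
under eq_bigr do rewrite h.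
have hn : (size s)%:R != 0 :> R by rewrite pnatr_eq0 -lt0n.
by rewrite big_const_seq count_predT iter_addr_0 -mulrnAl -[X in X * c]mulr_natr mulVf // mul1r.
Qed.

End DistLemmas.
Section TreeLemmas.
Variable n : nat.
Local Open Scope nat_scope.
Notation B := {ffun 'I_n -> bool}.

Definition U (t : tree n) : {set B} := [set x | teval t x].
Definition ones : B := [ffun => true].

Lemma ANDnE x : ANDn x = (x == ones).
Proof.
apply/forallP/eqP => [h|->]; first by apply/ffunP => i; rewrite ffunE h.
by move=> i; rewrite ffunE.
Qed.

Lemma teval_ones (t : tree n) : teval t ones.
Proof.
elim: t => [i|g a IHa b IHb] /=; first by rewrite ffunE.
by rewrite IHa IHb; case: g.
Qed.

Lemma cardU (t : tree n) : #|U t| = (@fitness n (Some t)).+1.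
Proof.
rewrite /fitness /U [in LHS](cardsD1 ones) inE teval_ones add1n; congr _.+1.
apply: eq_card => x; rewrite !inE ANDnE; case: (x =P ones) => [->|_] /=.
  by rewrite teval_ones.
by case: (teval t x).
Qed.

Lemma cardU_le (t : tree n) : #|U t| <= 2 ^ n.
Proof. by rewrite (leq_trans (max_card _)) // card_ffun card_bool card_ord. Qed.

Lemma fitness_lt (t : tree n) : @fitness n (Some t) < 2 ^ n.
Proof. by have := cardU_le t; rewrite cardU. Qed.

Lemma tsize_leaves (t : tree n) : (tsz t).+1 = 2 * tleaves t.
Proof. elim: t => [i|g a IHa b IHb] //=; lia. Qed.

Lemma tleaves_gt0 (t : tree n) : 0 < tleaves t.
Proof. elim: t => [i|g a IHa b IHb] //=; lia. Qed.

Definition zc (x : B) := #|[set i | ~~ x i]|.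
Definition Bl (l : 'I_n) : {set B} := [set x : B | x l].
Definition Zs (S : {set B}) := \sum_(l < n) #|S :\: Bl l|.

Lemma ZsE (S : {set B}) : Zs S = \sum_(x in S) zc x.
Proof.
have h1 l : #|S :\: Bl l| = \sum_(x in S) (~~ x l : nat).
  rewrite -sum1_card big_mkcond [RHS]big_mkcond; apply: eq_bigr => x _.
  by rewrite !inE; case: (x \in S); case: (x l).
have h2 x : zc x = \sum_(l < n) (~~ x l : nat).
  rewrite /zc -sum1_card big_mkcond; apply: eq_bigr => i _.
  by rewrite inE; case: (x i).
rewrite /Zs (eq_bigr _ (fun l _ => h1 l)) exchange_big; apply: eq_bigr => x _.
by rewrite h2.
Qed.

Lemma Zs_thresh (S : {set B}) r : r * (#|S| - #|[set x : B | zc x < r]|) <= Zs S.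
Proof.
set C := [set x : B | zc x < r].
have h1 : #|S| - #|C| <= #|S :\: C|.
  rewrite -(cardsID C S) leq_subLR leq_add2r.
  by apply: subset_leq_card; apply: subsetIr.
rewrite (leq_trans (leq_mul (leqnn r) h1)) // ZsE.
rewrite mulnC -sum_nat_const big_mkcond [X in _ <= X]big_mkcond /=.
apply: leq_sum => x _; rewrite !inE.
case: (x \in S); rewrite ?andbF ?andbT //=.
by case: ltnP.
Qed.

Lemma count_small r : #|[set x : B | zc x < r]| <= \sum_(j < r) 'C(n, j).
Proof.
pose f (x : B) := [set i | ~~ x i].
have finj : injective f.
  move=> x y e; apply/ffunP => i; have := congr1 (fun A : {set 'I_n} => i \in A) e.
  by rewrite /f !inE; case: (x i); case: (y i).
have step1 : #|[set x : B | zc x < r]| <= #|[set A : {set 'I_n} | #|A| < r]|.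
  rewrite -(card_imset _ finj); apply: subset_leq_card.
  by apply/subsetP => A /imsetP [x]; rewrite inE => hx ->; rewrite inE.
apply: (leq_trans step1); elim: r {step1} => [|r IH].
  by rewrite big_ord0 leqn0 cards_eq0; apply/eqP/setP => A; rewrite !inE.
rewrite big_ord_recr /=.
have -> : [set A : {set 'I_n} | #|A| < r.+1] =
   [set A : {set 'I_n} | #|A| < r] :|: [set A : {set 'I_n} | #|A| == r].
  by apply/setP => A; rewrite !inE ltnS leq_eqVlt orbC.
rewrite (leq_trans (leq_card_setU _ _)) // card_draws card_ord.
by rewrite leq_add2r.
Qed.

Lemma bin_le_exp m j : 'C(m, j) <= m ^ j.
Proof.
have h1 : 'C(m, j) <= m ^_ j by rewrite -bin_ffact leq_pmulr // fact_gt0.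
apply: (leq_trans h1); elim: j {h1} => [|j IH] //.
by rewrite ffactnSr expnSr leq_mul // leq_subr.
Qed.

Lemma sum_bin_le r : 1 < n -> \sum_(j < r) 'C(n, j) <= n ^ r.
Proof.
move=> hn; elim: r => [|r IH]; first by rewrite big_ord0.
rewrite big_ord_recr /= expnSr.
have h1 : 2 * n ^ r <= n ^ r * n by rewrite mulnC leq_mul2l hn orbT.
by rewrite (leq_trans (leq_add IH (bin_le_exp n r))) // addnn -mul2n.
Qed.

Lemma Zs_ge (S : {set B}) : #|S| <= (Zs S).+1.
Proof.
have h := Zs_thresh S 1; have h2 := count_small 1.
rewrite big_ord_recr big_ord0 /= bin0 in h2.
rewrite mul1n leq_subLR addnC in h; apply: (leq_trans h).
by rewrite -[(Zs S).+1]addn1 leq_add2l.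
Qed.

End TreeLemmas.
Section Psi.
Variable R : realType.

Definition psi (m s : R) := if s <= m then ln s else ln m + ln (ln s) - ln (ln m).
Definition lam (m s : R) := if s <= m then 1 else ln s.

Lemma L1 (a b : R) : 0 < a -> 0 < b -> a - b <= a * (ln a - ln b).
Proof.
move=> ha hb.
have hba : 0 < b / a by rewrite divr_gt0.
have h := @le_ln1Dx R (b / a - 1).
have : -1 < b / a - 1 by rewrite ltrBrDr addrC subrr.
move/h; rewrite addrC subrK ln_div ?posrE // => h2.
have h3 := ler_wpM2l (ltW ha) h2.
have e : a * (b / a - 1) = b - a by rewrite mulrBr mulr1 mulrCA divff ?mulr1 ?gt_eqF.
rewrite e in h3; rewrite mulrBr; rewrite mulrBr in h3; lra.
Qed.

Lemma ln_gt0' (x : R) : 1 <= ln x -> 1 < x.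
Proof.
move=> h; rewrite ltNge; apply/negP => hx.
by have := ln_le0 hx; lra.
Qed.

Lemma psi_drift (m s s' : R) : 1 <= ln m -> 1 <= s' -> s' <= s ->
  s - s' <= s * lam m s * (psi m s - psi m s').
Proof.
move=> hm hs' hss.
have m1 := ln_gt0' hm.
have s1 : 1 <= s by apply: le_trans hss.
have s0 : 0 < s by lra.
have s'0 : 0 < s' by lra.
have m0 : 0 < m by lra.
rewrite /lam /psi.
case: (lerP s m) => hsm.
  rewrite (le_trans hss hsm) mulr1; exact: L1.
have lnsm : ln m < ln s by rewrite ltr_ln ?posrE.
have lns0 : 0 < ln s by lra.
have lnm0 : 0 < ln m by lra.
case: (lerP s' m) => hs'm.
  have hA := L1 m0 s'0.
  have hB := L1 lns0 lnm0.
  have hC := L1 s0 m0.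
  have hD : ln s' <= ln m by rewrite ler_ln ?posrE.
  have hE : m <= s * ln s.
    have : s <= s * ln s by rewrite ler_peMr //; lra.
    lra.
  have hB' := ler_wpM2l (ltW s0) hB.
  have hE' : m * (ln m - ln s') <= s * ln s * (ln m - ln s').
    apply: ler_wpM2r => //; lra.
  have e : s * ln s * (ln m + ln (ln s) - ln (ln m) - ln s') =
     s * (ln s * (ln (ln s) - ln (ln m))) + s * ln s * (ln m - ln s') by ring.
  rewrite e; lra.
have lns'0 : 0 < ln s'.
  have : ln m < ln s' by rewrite ltr_ln ?posrE.
  lra.
have hC := L1 s0 s'0.
have hB := L1 lns0 lns'0.
have hB' := ler_wpM2l (ltW s0) hB.
have e : s * ln s * (ln m + ln (ln s) - ln (ln m) - (ln m + ln (ln s') - ln (ln m))) =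
   s * (ln s * (ln (ln s) - ln (ln s'))) by ring.
rewrite e; lra.
Qed.

Lemma lam_gt0 (m s : R) : 1 <= ln m -> 1 <= s -> 0 < lam m s.
Proof.
move=> hm hs; rewrite /lam; case: (lerP s m) => // hsm.
have m1 := ln_gt0' hm.
by apply: ln_gt0; lra.
Qed.

Lemma psi_mono (m s s' : R) : 1 <= ln m -> 1 <= s' -> s' <= s -> psi m s' <= psi m s.
Proof.
move=> hm hs' hss.
have h := psi_drift hm hs' hss.
have hl := lam_gt0 hm (le_trans hs' hss).
have hsl : 0 < s * lam m s by apply: mulr_gt0 => //; lra.
rewrite -subr_ge0 -(pmulr_rge0 _ hsl); lra.
Qed.

Lemma psi1 (m : R) : 1 <= ln m -> psi m 1 = 0.
Proof.
move=> hm; have m1 := ln_gt0' hm.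
by rewrite /psi ifT ?ln1 //; lra.
Qed.

Lemma psi_le (m s M : R) : 1 <= ln m -> 1 <= s -> s <= M -> 1 <= ln M ->
  psi m s <= ln m + ln (ln M).
Proof.
move=> hm hs hsM hM.
have m1 := ln_gt0' hm.
have lnlnM : 0 <= ln (ln M) by apply: ln_ge0.
rewrite /psi; case: (lerP s m) => hsm.
  have : ln s <= ln m by rewrite ler_ln ?posrE //; lra.
  lra.
have lnsm : ln m < ln s by rewrite ltr_ln ?posrE //; lra.
have : ln (ln s) <= ln (ln M).
  rewrite ler_ln ?posrE //; try lra.
  by rewrite ler_ln ?posrE //; lra.
have : 0 <= ln (ln m) by apply: ln_ge0.
lra.
Qed.

End Psi.
Section Hvl.
Variable R : realType.
Variable n : nat.

Lemma sum_unif_const (A : Type) (s : seq A) (c : R) :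
  (0 < size s)%N -> \sum_(x <- s) (size s)%:R^-1 * c = c.
Proof.
move=> hs; have hn : (size s)%:R != 0 :> R by rewrite pnatr_eq0 -lt0n.
by rewrite big_const_seq count_predT iter_addr_0 -mulrnAl -[X in X * c]mulr_natr mulVf // mul1r.
Qed.

Lemma Ex_dbind_unif_lbc (A B : Type) (s : seq A) (k : A -> dist R B) F c :
  (0 < size s)%N -> (forall y, c <= Ex (k y) F) -> c <= Ex (dbind (unif R s) k) F.
Proof.
move=> hs h; rewrite Ex_dbind_unif -{1}(sum_unif_const c hs).
by apply: ler_sum => x _; apply: ler_wpM2l; rewrite ?invr_ge0 ?ler0n ?h.
Qed.

Lemma nonneg_hvl (X : prog n) : nonneg (hvl R X).
Proof.
rewrite /hvl; apply: nonneg_dbind => [|op]; first exact: nonneg_unif.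
apply: nonneg_dbind => [|l]; first exact: nonneg_unif.
apply: nonneg_dbind => [|g]; first exact: nonneg_unif.
case: X => [t|]; last exact: nonneg_one.
case: op.
- apply: nonneg_dbind => [|k]; first exact: nonneg_unif.
  apply: nonneg_dbind => [|side]; first exact: nonneg_unif.
  exact: nonneg_one.
- apply: nonneg_dbind => [|k]; first exact: nonneg_unif.
  exact: nonneg_one.
- apply: nonneg_dbind => [|k]; first exact: nonneg_unif.
  exact: nonneg_one.
Qed.

Lemma tsz_gt0 (t : tree n) : (0 < tsz t)%N.
Proof. by case: t. Qed.

Lemma wsum_hvl (X : prog n) : (0 < n)%N -> Ex (hvl R X) (fun _ => 1) = 1.
Proof.
move=> hn; apply: Ex_dbind_unif_const => // op.
apply: Ex_dbind_unif_const => [|l]; first by rewrite size_enum_ord.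
apply: Ex_dbind_unif_const => // g.
case: X => [t|]; last by rewrite Ex_one.
case: op.
- apply: Ex_dbind_unif_const => [|k]; first by rewrite size_iota tsz_gt0.
  apply: Ex_dbind_unif_const => // side.
  by rewrite Ex_one.
- apply: Ex_dbind_unif_const => [|k]; first by rewrite size_iota tsz_gt0.
  by rewrite Ex_one.
- apply: Ex_dbind_unif_const => [|k]; first by rewrite size_iota tleaves_gt0.
  by rewrite Ex_one.
Qed.

Lemma hvl_None (G : prog n -> R) : (0 < n)%N ->
  (forall l, 1 <= G (Some (Leaf l))) -> 1 <= Ex (hvl R None) G.
Proof.
move=> hn hG; apply: Ex_dbind_unif_lbc => // op.
apply: Ex_dbind_unif_lbc => [|l]; first by rewrite size_enum_ord.
apply: Ex_dbind_unif_lbc => // g.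
by rewrite Ex_one.
Qed.

Lemma hvl_Some_lb (t : tree n) (G : prog n -> R) : (forall o, 0 <= G o) ->
  \sum_(l <- enum 'I_n) (12 * n * tsz t)%:R^-1 * G (Some (ins t 0 true l true))
    <= Ex (hvl R (Some t)) G.
Proof.
move=> hG.
have hge : forall (A : Type) (d : dist R A) (F : A -> R), nonneg d -> (forall x, 0 <= F x) -> 0 <= Ex d F.
  by move=> A d F; apply: Ex_ge0.
have nn : forall op (l : 'I_n) g, nonneg (match op with
      | INS => dbind (unif R (iota 0 (tsz t))) (fun k =>
               dbind (unif R [:: true; false]) (fun side =>
               [:: (1, Some (ins t k g l side))]))
      | DEL => dbind (unif R (iota 0 (tsz t))) (fun k => [:: (1, del t k)])
      | SUB => dbind (unif R (iota 0 (tleaves t))) (fun j =>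
               [:: (1, Some (sub_leaf t j l))])
      end).
  move=> op l g; case: op.
  + apply: nonneg_dbind => [|k]; first exact: nonneg_unif.
    apply: nonneg_dbind => [|side]; first exact: nonneg_unif.
    exact: nonneg_one.
  + apply: nonneg_dbind => [|k]; first exact: nonneg_unif.
    exact: nonneg_one.
  + apply: nonneg_dbind => [|k]; first exact: nonneg_unif.
    exact: nonneg_one.
rewrite /hvl.
set k := (fun op : hvl_op => _).
have h1 : (size [:: INS; DEL; SUB])%:R^-1 * Ex (k INS) G <= Ex (dbind (unif R [:: INS; DEL; SUB]) k) G.
  apply: Ex_dbind_unif_ge; first by left.
  move=> op; apply: hge => //; apply: nonneg_dbind => [|l]; first exact: nonneg_unif.
  apply: nonneg_dbind => [|g]; first exact: nonneg_unif.
  exact: nn.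
apply: le_trans h1.
rewrite /k Ex_dbind_unif size_enum_ord big_distrr.
apply: ler_sum => l _.
have nI : forall g, nonneg (dbind (unif R (iota 0 (tsz t)))
             (fun k0 : nat =>
              dbind (unif R [:: true; false])
                (fun side : bool => [:: ((1:R), Some (ins t k0 g l side))]))).
  move=> g; apply: nonneg_dbind => [|k0]; first exact: nonneg_unif.
  apply: nonneg_dbind => [|side]; first exact: nonneg_unif.
  exact: nonneg_one.
set X := Ex _ G.
have hX : 2%:R^-1 * ((tsz t)%:R^-1 * (2%:R^-1 * G (Some (ins t 0 true l true)))) <= X.
  rewrite /X.
  apply: le_trans; last first.
    apply: (Ex_dbind_unif_ge (x := true)); first by left.
    by move=> g; apply: hge.
  apply: ler_wpM2l; first by rewrite invr_ge0.
  apply: le_trans; last first.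
    apply: (Ex_dbind_unif_ge (x := 0%N)); first by case: (tsz t) (tsz_gt0 t) => //= T _; left.
    move=> k0; apply: hge => //; apply: nonneg_dbind => [|side]; first exact: nonneg_unif.
    exact: nonneg_one.
  rewrite size_iota; apply: ler_wpM2l; first by rewrite invr_ge0.
  apply: le_trans; last first.
    apply: (Ex_dbind_unif_ge (x := true)); first by left.
    by move=> side; apply: hge => //; apply: nonneg_one.
  by rewrite Ex_one.
have e : (12 * n * tsz t)%:R^-1 * G (Some (ins t 0 true l true)) =
   3%:R^-1 * (n%:R^-1 * (2%:R^-1 * ((tsz t)%:R^-1 * (2%:R^-1 * G (Some (ins t 0 true l true)))))) :> R.
  have -> : (12 * n * tsz t = 3 * n * 2 * tsz t * 2)%N by lia.
  rewrite !natrM !invfM; ring.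
rewrite e /=; apply: ler_wpM2l; first by rewrite invr_ge0.
by apply: ler_wpM2l; first by rewrite invr_ge0.
Qed.

End Hvl.
Section Comb.
Variable R : realType.

Lemma ln2_ge : 1 / 2 <= ln (2 : R).
Proof.
have h := @L1 R 2 1 ltac:(lra) ltac:(lra); rewrite ln1 subr0 in h.
lra.
Qed.

Lemma ln2_le : ln (2 : R) <= 1.
Proof.
have h := @le_ln1Dx R 1 ltac:(lra).
by move: h; rewrite (_ : 1 + 1 = 2 :> R) //; lra.
Qed.

Lemma lnn_ge (n : nat) : (1 < n)%N -> 1 / 2 <= ln (n%:R : R).
Proof.
move=> hn; apply: le_trans ln2_ge _.
rewrite ler_ln ?posrE ?ler_nat ?ltr0n //; lia.
Qed.

Lemma lnX_nat (n k : nat) : (0 < n)%N -> ln ((n ^ k)%:R : R) = k%:R * ln (n%:R).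
Proof.
by move=> hn; rewrite natrX lnXn ?ltr0n // mulr_natl.
Qed.

Lemma comb (n : nat) (S : {set {ffun 'I_n -> bool}}) : (1 < n)%N -> (2 <= #|S|)%N ->
  (#|S|%:R : R) * lam ((n ^ 4)%:R) (#|S|%:R) <= (4 * ln (n%:R)) * (Zs S)%:R.
Proof.
move=> hn hs.
have hl := lnn_ge hn.
have hZ := Zs_ge S.
rewrite /lam; case: (lerP (#|S|%:R : R) ((n ^ 4)%:R)) => hsm.
  rewrite mulr1.
  have : (#|S|%:R : R) <= (Zs S)%:R + 1 by rewrite natr1 ler_nat.
  have : (2 : R) <= #|S|%:R by rewrite (ler_nat R 2).
  move=> h1 h2.
  have hz0 : 0 <= ((Zs S)%:R : R) by [].
  nra.
rewrite ltr_nat in hsm.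
set s := #|S| in hs hsm hZ *.
pose q := trunc_log n s.
have hq4 : (4 <= q)%N by apply: trunc_log_max => //; exact: ltnW.
have hq1 : (s < n ^ q.+1)%N by apply: trunc_log_ltn.
pose r := q.-1.
have hqr : q = r.+1 by rewrite /r; lia.
have ht := Zs_thresh S r.
have hc := leq_trans (count_small n r) (sum_bin_le r hn).
have h2 : (2 * n ^ r <= s)%N.
  have : (n ^ q <= s)%N by apply: trunc_logP => //; lia.
  rewrite hqr expnSr => h.
  apply: leq_trans h; rewrite mulnC leq_mul2l; lia.
have hrs : (r * s <= 2 * Zs S)%N.
  have : (s <= 2 * (s - #|[set x : {ffun 'I_n -> bool} | zc x < r]|))%N by lia.
  move=> h; apply: (leq_trans (leq_mul (leqnn r) h)).
  by rewrite mulnCA leq_mul2l ht orbT.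
have hrsR : (r%:R * s%:R : R) <= 2 * (Zs S)%:R.
  by rewrite -natrM -[2]/(2%:R) -natrM ler_nat.
have hlns : ln (s%:R : R) < (r%:R + 2) * ln (n%:R).
  have : ln (s%:R : R) < ln ((n ^ q.+1)%:R) by rewrite ltr_ln ?posrE ?ltr0n ?ltr_nat //; lia.
  rewrite lnX_nat; last lia.
  by rewrite hqr -addn2 natrD.
have hr3 : (3 : R) <= r%:R by rewrite (ler_nat R 3); lia.
have hs0 : (0 : R) <= s%:R by [].
have hlnn : 0 <= ln (n%:R : R) by lra.
have : (s%:R : R) * ln (s%:R) <= s%:R * ((r%:R + 2) * ln (n%:R)).
  by apply: ler_wpM2l => //; apply: ltW.
have p : 0 <= (s%:R : R) * ln (n%:R) * (r%:R - 2).
  by apply: mulr_ge0; [apply: mulr_ge0 | lra].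
have a2 : 2 * ln (n%:R : R) * (r%:R * s%:R) <= 2 * ln (n%:R) * (2 * (Zs S)%:R).
  by apply: ler_wpM2l => //; lra.
have e1 : (s%:R : R) * ((r%:R + 2) * ln (n%:R)) = 2 * ln (n%:R) * (r%:R * s%:R) - s%:R * ln (n%:R) * (r%:R - 2) by ring.
have e2 : 2 * ln (n%:R : R) * (2 * (Zs S)%:R) = 4 * ln (n%:R) * (Zs S)%:R by ring.
lra.
Qed.

End Comb.
Section Main.
Variable R : realType.
Variables n ell : nat.
Hypothesis hn : (1 < n)%N.
Hypothesis hell : (n <= ell)%N.

Definition mN : R := (n ^ 4)%:R.
Definition Kp : R := 4 * ln (n%:R).
Definition Kc : R := 24%:R * n%:R * ell%:R * Kp.
Definition psiN (s : nat) : R := psi mN s%:R.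
Definition PhiF (f : nat) : R :=
  if (f < 2 ^ n)%N then Kc * psiN f.+1 else 1 + Kc * psiN (2 ^ n).
Definition Phi (X : prog n) : R := PhiF (fitness X).
Definition acc (X o : prog n) : prog n :=
  if (LeafCount o <= ell)%N && (fitness o <= fitness X)%N then o else X.
Definition Aind (X : prog n) : R := ((fitness X != 0%N) && (LeafCount X < ell)%N)%:R.

Lemma lnn_half : 1 / 2 <= ln (n%:R : R).
Proof. exact: lnn_ge. Qed.

Lemma hm : 1 <= ln mN.
Proof.
rewrite /mN lnX_nat; last lia.
have := lnn_half; lra.
Qed.

Lemma Kp_ge : 2 <= Kp.
Proof. rewrite /Kp; have := lnn_half; lra. Qed.

Lemma Kc_ge0 : 0 <= Kc.
Proof. rewrite /Kc; have := Kp_ge => h; apply: mulr_ge0; last lra. by rewrite !mulr_ge0 ?ler0n. Qed.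

Lemma psiN_mono a b : (1 <= a)%N -> (a <= b)%N -> psiN a <= psiN b.
Proof.
move=> ha hab; apply: psi_mono; first exact: hm.
  by rewrite (ler_nat R 1).
by rewrite ler_nat.
Qed.

Lemma psiN_ge0 a : (1 <= a)%N -> 0 <= psiN a.
Proof.
move=> ha; have := psiN_mono (leqnn 1) ha.
by rewrite /psiN psi1 //; exact: hm.
Qed.

Lemma pow2_gt0 : (0 < 2 ^ n)%N.
Proof. by rewrite expn_gt0. Qed.

Lemma PhiF_mono f' f : (f' <= f)%N -> PhiF f' <= PhiF f.
Proof.
move=> h; rewrite /PhiF; have hK := Kc_ge0.
case: (ltnP f' (2 ^ n)) => h1; case: (ltnP f (2 ^ n)) => h2.
- by apply: ler_wpM2l => //; apply: psiN_mono.
- have : Kc * psiN f'.+1 <= Kc * psiN (2 ^ n) by apply: ler_wpM2l => //; apply: psiN_mono.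
  lra.
- lia.
- by [].
Qed.

Lemma PhiF_ge0 f : 0 <= PhiF f.
Proof.
rewrite /PhiF; have hK := Kc_ge0.
case: ltnP => _; first by apply: mulr_ge0 => //; apply: psiN_ge0.
have : 0 <= Kc * psiN (2 ^ n) by apply: mulr_ge0 => //; apply: psiN_ge0; exact: pow2_gt0.
lra.
Qed.

Lemma PhiF_lt f : (f < 2 ^ n)%N -> PhiF f + 1 <= PhiF (2 ^ n).
Proof.
move=> h; rewrite /PhiF h ltnn; have hK := Kc_ge0.
have : Kc * psiN f.+1 <= Kc * psiN (2 ^ n) by apply: ler_wpM2l => //; apply: psiN_mono.
lra.
Qed.

Lemma Phi_Some (t : tree n) : Phi (Some t) = Kc * psiN #|U t|.
Proof. by rewrite /Phi /PhiF fitness_lt cardU. Qed.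

Lemma Phi_None : Phi None = 1 + Kc * psiN (2 ^ n).
Proof. by rewrite /Phi /PhiF /= ltnn. Qed.

Lemma D_ge0 (X o : prog n) : 0 <= Phi X - Phi (acc X o).
Proof.
rewrite subr_ge0 /acc; case: ifP => [/andP[_ h]|_] //.
exact: PhiF_mono.
Qed.

Lemma U_ins (t : tree n) (l : 'I_n) : U (Node true t (Leaf l)) = U t :&: Bl l.
Proof. by apply/setP => x; rewrite !inE. Qed.

Lemma ins0 (t : tree n) (l : 'I_n) : ins t 0 true l true = Node true t (Leaf l).
Proof. by case: t. Qed.

Lemma ones_in (t : tree n) (l : 'I_n) : ones n \in U t :&: Bl l.
Proof. by rewrite !inE teval_ones ffunE. Qed.

Lemma step_lb (X : prog n) : Aind X <= Ex (hvl R X) (fun o => Phi X - Phi (acc X o)).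
Proof.
rewrite /Aind; case hA: (_ && _); last first.
  by apply: Ex_ge0; [exact: nonneg_hvl | move=> o; exact: D_ge0].
case: X hA => [t|] /= /andP[hf hL]; last first.
  apply: hvl_None; first lia.
  move=> l.
  have hf' : (fitness (Some (Leaf l)) <= fitness (None : prog n))%N := ltnW (fitness_lt (Leaf l)).
  have hl1 : (LeafCount (Some (Leaf l)) <= ell)%N by rewrite /LeafCount /=; lia.
  rewrite /acc hf' hl1 /=.
  have := PhiF_lt (fitness_lt (Leaf l)); rewrite /Phi; lra.
apply: le_trans (hvl_Some_lb t (fun o => D_ge0 (Some t) o)).
have hacc l : acc (Some t) (Some (ins t 0 true l true)) = Some (Node true t (Leaf l)).
  have hL1 : (LeafCount (Some (ins t 0 true l true)) <= ell)%N.
    rewrite ins0 /LeafCount /=; lia.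
  have hF : (fitness (Some (ins t 0 true l true)) <= fitness (Some t))%N.
    rewrite ins0 -ltnS -!cardU U_ins; apply: subset_leq_card; exact: subsetIl.
  by rewrite /acc hL1 hF ins0.
under eq_bigr do rewrite hacc !Phi_Some U_ins.
rewrite big_enum /= (eq_bigl (fun _ => true)) //.
set s := #|U t|.
have hs2 : (2 <= s)%N.
  have := cardU t; rewrite /s /fitness; move: hf => h1 ->; by rewrite ltnS lt0n.
have hsl l : (1 <= #|U t :&: Bl l|)%N by rewrite card_gt0; apply/set0Pn; exists (ones n); exact: ones_in.
have hdr l : (s%:R : R) - #|U t :&: Bl l|%:R <=
    s%:R * lam mN s%:R * (psiN s - psiN #|U t :&: Bl l|).
  apply: psi_drift; first exact: hm.
    by rewrite (ler_nat R 1).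
  by rewrite ler_nat; apply: subset_leq_card; exact: subsetIl.
have hZ : ((Zs (U t))%:R : R) = \sum_(l < n) ((s%:R : R) - #|U t :&: Bl l|%:R).
  rewrite /Zs natr_sum; apply: eq_bigr => l _.
  by rewrite /s -(cardsID (Bl l) (U t)) natrD addrC addKr.
have hcomb := @comb R n (U t) hn hs2.
rewrite -/s in hcomb.
have hlam : 0 < lam mN s%:R by apply: lam_gt0; [exact: hm | rewrite (ler_nat R 1); lia].
have hsl0 : 0 < (s%:R : R) * lam mN s%:R by apply: mulr_gt0 => //; rewrite ltr0n; lia.
set Sig := \sum_(l < n) (psiN s - psiN #|U t :&: Bl l|).
have h1 : ((Zs (U t))%:R : R) <= s%:R * lam mN s%:R * Sig.
  rewrite hZ /Sig mulr_sumr; apply: ler_sum => l _; exact: hdr.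
have h2 : 1 <= Kp * Sig.
  have h3 : (s%:R : R) * lam mN s%:R <= (s%:R * lam mN s%:R) * (Kp * Sig).
    apply: (le_trans hcomb); rewrite /Kp.
    have hK : 0 <= 4 * ln (n%:R : R) by have := lnn_half; lra.
    rewrite mulrCA; apply: ler_wpM2l => //.
  by rewrite -(ler_pM2l hsl0) mulr1.
under eq_bigr do rewrite -mulrBr.
rewrite -mulr_sumr -mulr_sumr -/Sig.
have hT : ((tsz t).+1 = 2 * tleaves t)%N := tsize_leaves t.
have hT2 : (12 * n * tsz t <= 24 * n * ell)%N.
  rewrite (_ : 24 * n * ell = 12 * n * (2 * ell))%N; last lia.
  rewrite leq_mul2l; apply/orP; right; lia.
have hpos : (0 < 12 * n * tsz t)%N by rewrite !muln_gt0 tsz_gt0; lia.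
set a := ((12 * n * tsz t)%N%:R : R).
have ha : 0 < a by rewrite ltr0n.
have hb : a <= 24%:R * n%:R * ell%:R by rewrite /a -!natrM ler_nat.
have hp : 0 <= 24%:R * n%:R * ell%:R :> R by rewrite !mulr_ge0 ?ler0n.
have hKS : a <= Kc * Sig.
  rewrite /Kc -mulrA; apply: le_trans hb _.
  by have := ler_wpM2l hp h2; rewrite mulr1.
by rewrite -(ler_pM2l ha) mulr1 mulVKf ?gt_eqF.
Qed.

Lemma nonneg_step (X : prog n) : nonneg (rls_step R ell X).
Proof.
rewrite /rls_step; have := @nonneg_hvl R n X; rewrite /nonneg.
by elim: (hvl R X) => //= p d IH /andP[h1 h2]; rewrite h1 IH.
Qed.

Lemma step (X : prog n) : Ex (rls_step R ell X) Phi <= Phi X - Aind X.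
Proof.
have -> : Ex (rls_step R ell X) Phi = Ex (hvl R X) (fun o => Phi X - (Phi X - Phi (acc X o))).
  rewrite /Ex /rls_step big_map; apply: eq_bigr => p _ /=; rewrite /acc.
  by rewrite opprB addrCA subrr addr0.
rewrite Ex_lin wsum_hvl; last lia.
have := step_lb X; lra.
Qed.

Lemma nonneg_dist t : nonneg (rls_dist R n ell t).
Proof.
elim: t => [|t IH]; first exact: nonneg_one.
change (nonneg (dbind (rls_dist R n ell t) (rls_step R ell))).
apply: nonneg_dbind; first exact: IH.
move=> X; exact: nonneg_step.
Qed.

Lemma p_eq t : p_notfull_nonopt R n ell t = Ex (rls_dist R n ell t) Aind.
Proof.
rewrite /p_notfull_nonopt /Ex big_mkcond; apply: eq_bigr => p _; rewrite /Aind.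
by case: (_ && _); rewrite /= ?mulr1 ?mulr0.
Qed.

Lemma tele t : ET0_partial R n ell t + Ex (rls_dist R n ell t) Phi <= Phi None.
Proof.
elim: t => [|t IH].
  by rewrite /ET0_partial big_ord0 add0r /= Ex_one.
have h : Ex (rls_dist R n ell t.+1) Phi <= Ex (rls_dist R n ell t) Phi - Ex (rls_dist R n ell t) Aind.
  change (Ex (dbind (rls_dist R n ell t) (rls_step R ell)) Phi <= Ex (rls_dist R n ell t) Phi - Ex (rls_dist R n ell t) Aind).
  rewrite Ex_dbind.
  have -> : Ex (rls_dist R n ell t) Phi - Ex (rls_dist R n ell t) Aind =
     Ex (rls_dist R n ell t) (fun X => Phi X - Aind X).
    by rewrite /Ex -sumrB; apply: eq_bigr => p _; rewrite mulrBr.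
  apply: (@Ex_le _ _ (rls_dist R n ell t) (fun X => Ex (rls_step R ell X) Phi)).
    exact: nonneg_dist.
  exact: step.
have e : ET0_partial R n ell t.+1 = ET0_partial R n ell t + p_notfull_nonopt R n ell t.
  by rewrite /ET0_partial big_ord_recr.
rewrite e p_eq; move: IH h; lra.
Qed.

Lemma ET0_le t : ET0_partial R n ell t <= Phi None.
Proof.
have := tele t.
have : 0 <= Ex (rls_dist R n ell t) Phi.
  by apply: Ex_ge0; [exact: nonneg_dist | move=> X; exact: PhiF_ge0].
lra.
Qed.

Lemma Phi_None_le : Phi None <= 481%:R * ell%:R * n%:R * (ln (n%:R : R)) ^+ 2.
Proof.
rewrite Phi_None.
have hl := lnn_half.
have h2n : (1 : R) <= (2 ^ n)%:R by rewrite (ler_nat R 1) expn_gt0.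
have hln2n : ln ((2 ^ n)%:R : R) = n%:R * ln 2.
  by rewrite lnX_nat.
have hl2 := @ln2_ge R.
have hl2' := @ln2_le R.
have hn2 : (2 : R) <= n%:R by rewrite (ler_nat R 2).
have hM : 1 <= ln ((2 ^ n)%:R : R).
  rewrite hln2n.
  have : 2 * (1/2) <= n%:R * ln (2 : R) by apply: ler_pM => //; lra.
  lra.
have hp := psi_le hm (le_refl 1) h2n hM.
have hp' : psiN (2 ^ n) <= ln mN + ln (ln ((2 ^ n)%:R : R)).
  by apply: psi_le => //; exact: hm.
have hlnln : ln (ln ((2 ^ n)%:R : R)) <= ln (n%:R).
  rewrite hln2n ler_ln ?posrE; last by rewrite ltr0n; lia.
  - have : n%:R * ln (2:R) <= n%:R * 1 by apply: ler_wpM2l => //.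
    lra.
  - by apply: mulr_gt0; [rewrite ltr0n; lia | lra].
have hmN : ln mN = 4 * ln (n%:R) by rewrite /mN lnX_nat //; lia.
have hpsi : psiN (2 ^ n) <= 5 * ln (n%:R) by lra.
have hell2 : (2 : R) <= ell%:R by rewrite (ler_nat R 2); lia.
set L := ln (n%:R : R) in hl hlnln hmN hpsi *.
set N := (n%:R : R) in hn2 hl *.
set E := (ell%:R : R) in hell2 *.
have hK : Kc = 96 * N * E * L by rewrite /Kc /Kp -/L; ring.
rewrite hK.
have hNE : 4 <= N * E by nra.
have hL2 : 1 / 4 <= L ^+ 2 by rewrite expr2; nra.
have hNEL : 1 <= N * E * L ^+ 2 by nra.
have hKp : 0 <= 96 * N * E * L by apply: mulr_ge0; [nra | lra].
have : 96 * N * E * L * psiN (2 ^ n) <= 96 * N * E * L * (5 * L) by apply: ler_wpM2l.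
have e : 481%:R * E * N * L ^+ 2 = 481 * (N * E * L ^+ 2) by rewrite expr2; ring.
rewrite e.
have e2 : 96 * N * E * L * (5 * L) = 480 * (N * E * L ^+ 2) by rewrite expr2; ring.
lra.
Qed.

End Main.
Theorem lemma5 (R : realType) :
  exists (C : R) (N : nat), forall n ell : nat, (N <= n)%N -> (n <= ell)%N ->
    forall t : nat,
      ET0_partial R n ell t <= C * ell%:R * n%:R * (ln (n%:R : R)) ^+ 2.
Proof.
exists 481%:R, 2%N => n ell hN hne t.
exact: le_trans (@ET0_le R n ell hN hne t) (@Phi_None_le R n ell hN hne).
Qed.
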